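(* Let $G$ be a graph of order $n$ with stability number $\alpha$ (so $1\le\alpha\le n$). Then \[ F(G) \le f_{\mathsf T}(n,\alpha), \] with equality if and only if $G \simeq T_{n,\alpha}$.
   Context: All graphs are finite, simple and undirected; the stability number $\alpha(G)$ is the maximum size of a stable set. The Fibonacci index $F(G)$ of $G$ is the number of stable sets of $G$, including the empty set. For integers $1\le \alpha\le n$, the Turán graph $T_{n,\alpha}$ is the disjoint union of $\alpha$ cliques whose orders sum to $n$ and differ pairwise by at most one. Define $f_{\mathsf T}(n,\alpha)=F(T_{n,\alpha})=(\lceil n/\alpha\rceil+1)^p(\lfloor n/\alpha\rfloor+1)^{\alpha-p}$ with $p = n \bmod \alpha$. *)

(* Defs.v *)
From mathcomp Require Import all_boot.
Set Implicit Arguments. Unset Strict Implicit. Unset Printing Implicit Defensive.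

Definition simple_graph (T : finType) (e : rel T) : Prop :=
  symmetric e /\ irreflexive e.

Definition stable (T : finType) (e : rel T) (A : {set T}) : bool :=
  [forall x in A, forall y in A, ~~ e x y].

Definition alpha (T : finType) (e : rel T) : nat :=
  \max_(A : {set T} | stable e A) #|A|.

Definition fib_index (T : finType) (e : rel T) : nat :=
  #|[set A : {set T} | stable e A]|.

(* Turán graph T_{n,a} on vertex set 'I_n: disjoint union of a cliques, the
   residue classes modulo a (their sizes differ pairwise by at most one). *)
Definition turan_rel (n a : nat) : rel 'I_n :=
  fun i j => (i != j) && (i %% a == j %% a).

Definition iso_turan (T : finType) (e : rel T) (a : nat) : Prop :=
  exists f : T -> 'I_#|T|, bijective f /\
    forall x y, e x y = @turan_rel #|T| a (f x) (f y).

Definition fT (n a : nat) : nat :=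
  let p := n %% a in
  ((n + a.-1) %/ a + 1) ^ p * (n %/ a + 1) ^ (a - p).

(* Main.v *)
Require Import Defs.
From mathcomp Require Import all_boot.
From Stdlib Require Import Lia.
Set Implicit Arguments. Unset Strict Implicit. Unset Printing Implicit Defensive.

Ltac slia_pre :=
  repeat match goal with
  | H : is_true (_ <= _) |- _ => move/leP: H => H
  | H : is_true (_ < _) |- _ => move/ltP: H => H
  | H : is_true (_ == _) |- _ => move/eqP: H => H
  | H : is_true (~~ (_ == _)) |- _ => move/eqP: H => H
  end;
  try match goal with
  | |- is_true (_ <= _) => apply/leP
  | |- is_true (_ < _) => apply/ltP
  | |- is_true (_ == _) => apply/eqP
  | |- is_true (~~ (_ == _)) => apply/eqP
  end;
  repeat match goal with H : context [addn] |- _ => rewrite -plusE in H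
   | H : context [muln] |- _ => rewrite -multE in H
   | H : context [subn] |- _ => rewrite -minusE in H end;
  rewrite -?plusE -?multE -?minusE.
Ltac slia := slia_pre; nia.

Definition cnt n a j := count (fun k => k %% a == j) (iota 0 n).

Lemma cntS n a j : cnt n.+1 a j = cnt n a j + (n %% a == j).
Proof. by rewrite /cnt -addn1 iotaD count_cat /= addn0. Qed.

Lemma succ_dm m a : 0 < a ->
  ((m %% a).+1 < a /\ m.+1 %/ a = m %/ a /\ m.+1 %% a = (m %% a).+1) \/
  ((m %% a).+1 = a /\ m.+1 %/ a = (m %/ a).+1 /\ m.+1 %% a = 0).
Proof.
move=> a0. have lt := ltn_pmod m a0.
have E : m.+1 = m %/ a * a + (m %% a).+1 by rewrite addnS -divn_eq.
case: (ltnP (m %% a).+1 a) => H.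
- left; split=>//; split.
  + by rewrite E divnMDl // (divn_small H) addn0.
  + by rewrite E modnMDl (modn_small H).
- have H' : (m %% a).+1 = a by apply/eqP; rewrite eqn_leq lt H.
  right; split=>//; split.
  + by rewrite E H' -mulSnr mulnK.
  + by rewrite E H' -mulSnr modnMl.
Qed.

Lemma cnt_formula m a j : 0 < a -> j < a -> cnt m a j = m %/ a + (j < m %% a).
Proof.
move=> a0 ja; elim: m => [|m IH]; first by rewrite /cnt /= div0n mod0n.
rewrite cntS IH; case: (succ_dm m a0) => [[_ [-> ->]]|[H [-> ->]]].
- rewrite -addnA; congr (_ + _).
  have -> : (j < (m %% a).+1) = (j <= m %% a) by [].
  by case: ltngtP.
- have jr : j <= m %% a by rewrite -ltnS H.
  have X : (j < m %% a) + (m %% a == j) = 1 by move: jr; case: ltngtP.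
  by rewrite ltn0 addn0 -addnA X addn1.
Qed.

Lemma cnt_big m a j : 0 < a -> a <= j -> cnt m a j = 0.
Proof.
move=> a0 aj; rewrite /cnt (@eq_count _ _ pred0) ?count_pred0 // => k /=.
by apply/negbTE; rewrite neq_ltn (leq_trans (ltn_pmod _ a0) aj).
Qed.

Lemma fT0a a : fT 0 a = 1.
Proof. by rewrite /fT mod0n div0n add0n exp1n expn0. Qed.

Lemma fTn0 n : fT n 0 = 1.
Proof. by rewrite /fT !divn0 modn0 sub0n expn0 muln1 exp1n. Qed.

Lemma fT_alt n a : 0 < a ->
  fT n a = (n %/ a + 2) ^ (n %% a) * (n %/ a + 1) ^ (a - n %% a).
Proof.
move=> a0; rewrite /fT; case: (posnP (n %% a)) => [->|r0]; first by rewrite !expn0.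
congr (_ ^ _ * _).
have E := divn_eq n a. have lt := ltn_pmod n a0.
have -> : n + a.-1 = (n %/ a).+1 * a + (n %% a).-1 by slia.
rewrite divnMDl // (@divn_small (n %% a).-1 a); last by slia.
by rewrite addn0 -addn1 -addnA.
Qed.

Lemma fT_rec m a : 0 < a -> fT m.+1 a = fT m a + fT (m - m %/ a) a.-1.
Proof.
case: a => // a _; have a0 : 0 < a.+1 by [].
have E := divn_eq m a.+1. have lt := ltn_pmod m a0.
move: E lt; set q := m %/ a.+1; set r := m %% a.+1 => E lt.
rewrite (fT_alt m.+1 a0) (fT_alt m a0) /=.
move: (succ_dm m a0); rewrite -/q -/r => -[[H [-> ->]]|[H [-> ->]]].
- have a1 : 0 < a by slia.
  have -> : m - q = q * a + r by slia.
  rewrite fT_alt // divnMDl // modnMDl divn_small; last by slia.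
  rewrite modn_small; last by slia.
  rewrite addn0 /=.
  have -> : a.+1 - r = (a - r).+1 by slia.
  have -> : a.+1 - r.+1 = a - r by slia.
  rewrite !expnS. set X := _ ^ r. set Y := _ ^ (a - r). slia.
- clearbody q r; case: a H a0 E lt => [|a] H a0 E lt.
  + have r0 : r = 0 by slia.
    by rewrite fTn0 r0 subn0 !expn0 !expn1; slia.
  + have -> : m - q = q.+1 * a.+1 by slia.
    rewrite fT_alt // mulnK // modnMl.
    have -> : r = a.+1 by slia.
    rewrite !subn0 !expn0 !mul1n.
    have -> : q.+1 + 1 = q + 2 by slia.
    have -> : a.+2 - a.+1 = 1 by slia.
    rewrite expn1 (expnS _ a.+1). set X := _ ^ a.+1. slia.
Qed.

Lemma fT_pos n a : 0 < fT n a.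
Proof. by rewrite /fT muln_gt0 !expn_gt0 !addn1. Qed.

Lemma fT_S b m : fT m b <= fT m.+1 b.
Proof.
case: (posnP b) => [->|b0]; first by rewrite !fTn0.
by rewrite fT_rec // leq_addr.
Qed.

Lemma fT_Slt b m : 0 < b -> fT m b < fT m.+1 b.
Proof. by move=> b0; rewrite fT_rec // -[X in X < _]addn0 ltn_add2l fT_pos. Qed.

Lemma fT_mono b x y : x <= y -> fT x b <= fT y b.
Proof. exact: (@homo_leq _ (fT^~ b) (fun x y => x <= y) leqnn (fun _ _ _ => @leq_trans _ _ _) (fun n => fT_S b n)). Qed.

Lemma fT_smono b x y : 0 < b -> x < y -> fT x b < fT y b.
Proof. move=> b0; exact: (@homo_ltn _ (fT^~ b) (fun x y => x < y) (fun _ _ _ => @ltn_trans _ _ _) (fun n => fT_Slt n b0)). Qed.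

Lemma prod_cnt n a : 0 < a -> \prod_(i < a) (cnt n a i + 1) = fT n a.
Proof.
move=> a0; rewrite fT_alt //.
under eq_bigr => i _ do rewrite (cnt_formula n a0 (ltn_ord i)).
have pa := ltn_pmod n a0.
move: pa; set q := n %/ a; set p := n %% a => pa.
rewrite -(big_mkord xpredT (fun i => q + (i < p) + 1)).
rewrite (big_cat_nat (leq0n p) (ltnW pa)) /=.
rewrite (@eq_big_nat _ _ _ 0 p _ (fun=> q + 2)); last first.
  by move=> i /andP [_ ->]; rewrite -addnA.
rewrite (@eq_big_nat _ _ _ p a _ (fun=> q + 1)); last first.
  by move=> i /andP [h _]; rewrite ltnNge h addn0.
by rewrite !prod_nat_const_nat subn0.
Qed.

Lemma card_ord_cnt n a j : #|[set k : 'I_n | k %% a == j]| = cnt n a j.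
Proof. rewrite cardsE -sum1_card -(big_mkord (fun k => k %% a == j) (fun=> 1)) sum1_count /index_iota subn0 //. Qed.

Section Graph.
Variable T : finType.
Variable e : rel T.
Hypothesis esym : symmetric e.
Hypothesis eirr : irreflexive e.

Definition stS (V : {set T}) := [set A : {set T} | (A \subset V) && stable e A].
Definition FV (V : {set T}) := #|stS V|.
Definition bounded (V : {set T}) a := forall A : {set T}, A \subset V -> stable e A -> #|A| <= a.
Definition Nb v := [set y | e v y].
Definition deg (V : {set T}) v := #|(V :\ v) :&: Nb v|.

Lemma stableP (A : {set T}) : reflect (forall x y, x \in A -> y \in A -> ~~ e x y) (stable e A).
Proof.
apply: (iffP idP) => [/forall_inP H x y xA yA | H].
  exact: (forall_inP (H x xA)).
by apply/forall_inP => x xA; apply/forall_inP => y yA; exact: H.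
Qed.

Lemma stableU1 v (A : {set T}) : stable e A -> (forall y, y \in A -> ~~ e v y) -> stable e (v |: A).
Proof.
move=> /stableP sA H; apply/stableP => x y; rewrite !in_setU1.
case/orP => [/eqP ->|xA]; case/orP => [/eqP ->|yA].
- by rewrite eirr.
- exact: H.
- by rewrite esym; exact: H.
- exact: sA.
Qed.

Lemma stable1 x : stable e [set x].
Proof. by apply/stableP => y z; rewrite !inE => /eqP -> /eqP ->; rewrite eirr. Qed.

Lemma FV0 : FV set0 = 1.
Proof.
rewrite /FV (_ : stS set0 = [set set0]) ?cards1 //.
apply/setP => A; rewrite !inE subset0; case: eqP => // ->.
by apply/stableP => x y; rewrite inE.
Qed.

Lemma FV_rec (V : {set T}) v : v \in V -> FV V = FV (V :\ v) + FV ((V :\ v) :\: Nb v).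
Proof.
move=> vV; rewrite /FV -(cardsID [set A : {set T} | v \in A] (stS V)) addnC; congr (_ + _).
  apply: eq_card => A; rewrite !inE subsetD1.
  by case: (v \in A); case: (A \subset V).
set W := (V :\ v) :\: Nb v.
have vW : v \notin W by rewrite /W !inE eqxx andbF.
transitivity #|(fun B => v |: B) @: stS W|; last first.
  apply: card_in_imset => B1 B2; rewrite !inE => /andP [s1 _] /andP [s2 _] E.
  have n1 : v \notin B1 by apply: contra vW => /(subsetP s1).
  have n2 : v \notin B2 by apply: contra vW => /(subsetP s2).
  by rewrite -(setU1K n1) E setU1K.
apply: eq_card => A; rewrite !inE; apply/idP/imsetP.
- case/andP => /andP [AV sA] vA; exists (A :\ v); last by rewrite setD1K.
  rewrite inE; apply/andP; split.
    apply/subsetP => y; rewrite !inE => /andP [yv yA].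
    rewrite yv (subsetP AV _ yA) andbT /=.
    by move/stableP: sA => sA; rewrite (sA v y vA yA).
  by apply/stableP => x y; rewrite !inE => /andP [_ xA] /andP [_ yA]; move/stableP: sA; apply.
- case=> B; rewrite inE => /andP [BW sB] ->; rewrite setU11 andbT.
  apply/andP; split.
    apply/subsetP => y; rewrite in_setU1 => /orP [/eqP -> //|/(subsetP BW)].
    by rewrite !inE => /andP [_ /andP [_ ->]].
  apply: stableU1 => // y /(subsetP BW); rewrite !inE => /andP [].
  by move=> ->.
Qed.

Lemma cardW (V : {set T}) v : v \in V -> #|(V :\ v) :\: Nb v| = #|V| - 1 - deg V v.
Proof.
move=> vV; rewrite /deg cardsD (cardsD1 v V) vV add1n subn1 /=. done.
Qed.


Lemma greedy D n : forall V : {set T}, #|V| <= n ->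
  (forall x, x \in V -> deg V x <= D) ->
  exists2 A : {set T}, (A \subset V) && stable e A & #|V| <= #|A| * D.+1.
Proof.
elim: n => [|n IH] V.
  rewrite leqn0 cards_eq0 => /eqP -> _; exists set0; last by rewrite cards0.
  by rewrite sub0set; apply/stableP => x y; rewrite inE.
move=> Vn Hd; case: (set_0Vmem V) => [->|[x xV]].
  exists set0; last by rewrite cards0.
  by rewrite sub0set; apply/stableP => y z; rewrite inE.
set V' := (V :\ x) :\: Nb x.
have cV' : #|V| = (deg V x + #|V'|).+1.
  by rewrite (cardsD1 x V) xV /deg /V' cardsID.
have [A' /andP [A'V sA'] HA'] : exists2 A' : {set T}, (A' \subset V') && stable e A' & #|V'| <= #|A'| * D.+1.
  apply: IH.
    by move: Vn; rewrite cV' ltnS => /(leq_trans _); apply; rewrite leq_addl.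
  move=> y yV'; apply: leq_trans (Hd y _); last first.
    by move: yV'; rewrite /V' !inE => /andP [_ /andP [_ ->]].
  apply: subset_leq_card; apply: setSI; apply: setSD.
  by apply/subsetP => z; rewrite /V' !inE => /andP [_ /andP [_ ->]].
have xA' : x \notin A' by apply/negP => /(subsetP A'V); rewrite /V' !inE eqxx andbF.
exists (x |: A').
  apply/andP; split.
    apply/subsetP => y; rewrite in_setU1 => /orP [/eqP -> //|/(subsetP A'V)].
    by rewrite /V' !inE => /andP [_ /andP [_ ->]].
  apply: stableU1 => // y /(subsetP A'V); rewrite /V' !inE => /andP [].
  by move=> ->.
rewrite cardsU1 xA' cV' add1n.
have := Hd x xV. move: HA'. set a := #|A'|. set b := #|V'|. set d := deg V x. move=> h1 h2; slia.
Qed.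

Lemma exists_deg (V : {set T}) a m : #|V| = m.+1 -> bounded V a ->
  exists2 v, v \in V & m %/ a <= deg V v.
Proof.
move=> cV bV.
have [v0 v0V] : exists v0, v0 \in V by apply/card_gt0P; rewrite cV.
case: (posnP (m %/ a)) => [->|q0]; first by exists v0.
case: (pickP [pred v in V | m %/ a <= deg V v]) => [v /andP [] | H]; first by exists v.
have Hd : forall x, x \in V -> deg V x <= (m %/ a).-1.
  move=> x xV; have := H x; rewrite /= xV /= => /negbT; rewrite -ltnNge.
  by rewrite -(ltn_predK q0) ltnS.
have [A /andP [AV sA] HA] := greedy (leqnn #|V|) Hd.
have Aa := bV A AV sA.
have := leq_divM m a. move: HA; rewrite cV (ltn_predK q0).
set q := m %/ a. set s := #|A|. move: Aa; rewrite -/s => h1 h2 h3; slia.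
Qed.

Definition Tur (V : {set T}) a (col : T -> nat) :=
  (forall x y, x \in V -> y \in V -> x != y -> e x y = (col x == col y)) /\
  (forall i, #|[set x in V | col x == i]| = cnt #|V| a i).

Lemma add_eq2 x1 x2 y1 y2 : x1 <= y1 -> x2 <= y2 -> x1 + x2 = y1 + y2 -> x1 = y1 /\ x2 = y2.
Proof. move=> h1 h2 h3; split; slia. Qed.

Lemma fib_split (V : {set T}) v k (c : T -> nat) : v \in V ->
  #|[set x in V | c x == k]| = (c v == k) + #|[set x in V :\ v | c x == k]|.
Proof.
move=> vV; rewrite (cardsD1 v); congr (_ + _); first by rewrite !inE vV.
by apply: eq_card => x; rewrite !inE; case: (x == v).
Qed.

Lemma main_ind N : forall (V : {set T}) a, #|V| <= N -> bounded V a ->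
  FV V <= fT #|V| a /\ (FV V = fT #|V| a -> exists col : T -> nat, Tur V a col).
Proof.
have empty_case : forall a, FV set0 <= fT #|@set0 T| a /\
   (FV set0 = fT #|@set0 T| a -> exists col : T -> nat, Tur set0 a col).
  move=> a; rewrite FV0 cards0 fT0a; split=> // _; exists (fun _ => 0); split.
    by move=> x y; rewrite inE.
  by move=> i; rewrite cards0 (_ : [set x in set0 | _] = set0) ?cards0 //; apply/setP => x; rewrite !inE.
elim: N => [|N IH] V a.
  by rewrite leqn0 cards_eq0 => /eqP -> _; apply: empty_case.
move=> VN bV; case: (set_0Vmem V) => [->|[v0 v0V]]; first exact: empty_case.
have a0 : 0 < a.
  by apply: leq_trans (bV [set v0] _ (stable1 v0)); rewrite ?cards1 // sub1set.
have [m cV] : exists m, #|V| = m.+1 by exists #|V|.-1; rewrite prednK //; apply/card_gt0P; exists v0.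
have [v vV dv] := exists_deg cV bV.
set V1 := V :\ v. set W := V1 :\: Nb v. set d := deg V v.
have cV1 : #|V1| = m by rewrite /V1 (cardsD1 v V) vV in cV; case: cV.
have cW : #|W| = m - d by rewrite /W cardW // cV subn1.
have dm : d <= m by rewrite -cV1 /d /deg subset_leq_card // subsetIl.
have bV1 : bounded V1 a.
  by move=> A AV1 sA; apply: bV => //; apply: subset_trans AV1 _; apply: subsetDl.
have bW : bounded W a.-1.
  move=> A AW sA; have vA : v \notin A by apply/negP => /(subsetP AW); rewrite !inE eqxx andbF.
  have := bV (v |: A) _ _; rewrite cardsU1 vA add1n -(ltn_predK a0) ltnS; apply.
    apply/subsetP => y; rewrite in_setU1 => /orP [/eqP -> //|/(subsetP AW)].
    by rewrite !inE => /andP [_ /andP [_ ->]].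
  apply: stableU1 => // y /(subsetP AW); rewrite !inE => /andP [].
  by move=> ->.
have N1 : #|V1| <= N by rewrite cV1 -ltnS -cV.
have N2 : #|W| <= N by rewrite cW; apply: leq_trans (leq_subr _ _) _; rewrite -ltnS -cV.
have [le1 eq1] := IH V1 a N1 bV1.
have [le2 eq2] := IH W a.-1 N2 bW.
rewrite cV1 in le1 eq1; rewrite cW in le2 eq2.
have rec : FV V = FV V1 + FV W by apply: FV_rec.
have frec : fT #|V| a = fT m a + fT (m - m %/ a) a.-1 by rewrite cV fT_rec.
have mono : fT (m - d) a.-1 <= fT (m - m %/ a) a.-1 by apply: fT_mono; apply: leq_sub2l.
split; first by rewrite rec frec leq_add // (leq_trans le2 mono).
rewrite rec frec => Heq.
have [E1 E2] := add_eq2 le1 (leq_trans le2 mono) Heq.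
have [col' [T1 T2]] := eq1 E1.
rewrite cV1 in T2.
have dq : d = m %/ a.
  case: (ltngtP d (m %/ a)) => // h; first by move: dv; rewrite leqNgt h.
  case: (posnP a.-1) => [a1|a1].
    have a1' : a = 1 by rewrite -(ltn_predK a0) a1.
    by move: h; rewrite a1' divn1 ltnNge dm.
  have : fT (m - d) a.-1 < fT (m - m %/ a) a.-1.
    apply: fT_smono => //; slia.
  by rewrite -E2 ltnNge le2.
have [i ia Ki] : exists2 i, i < a & [set x in V1 | col' x == i] \subset Nb v.
  case: (boolP [exists i : 'I_a, [set x in V1 | col' x == i] \subset Nb v]) => [/existsP [i Hi]|Hn].
    by exists i.
  exfalso.
  pose psi (i : 'I_a) := odflt v [pick y in W | col' y == i].
  have Hpsi : forall i : 'I_a, psi i \in W /\ col' (psi i) = i.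
    move=> i; move: Hn; rewrite negb_exists => /forallP /(_ i) /subsetPn [x].
    rewrite inE => /andP [xV1 /eqP cx] xN.
    have xW : x \in W by rewrite /W inE xN xV1.
    rewrite /psi; case: pickP => [y /andP [yW /eqP cy] //|H].
    by move: (H x); rewrite xW cx eqxx.
  have WV1 : W \subset V1 by apply: subsetDl.
  have psi_inj : injective psi.
    by move=> i j E; apply: ord_inj; rewrite -(proj2 (Hpsi i)) -(proj2 (Hpsi j)) E.
  set S := psi @: [set: 'I_a].
  have cS : #|S| = a by rewrite card_imset // cardsT card_ord.
  have SW : S \subset W by apply/subsetP => y /imsetP [j _ ->]; exact: (proj1 (Hpsi j)).
  have sS : stable e S.
    apply/stableP => x y /imsetP [j1 _ ->] /imsetP [j2 _ ->].
    case: (eqVneq j1 j2) => [->|jn]; first by rewrite eirr.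
    have xy : psi j1 != psi j2 by apply: contra jn => /eqP E; rewrite (psi_inj _ _ E).
    rewrite (T1 _ _ (subsetP WV1 _ (proj1 (Hpsi j1))) (subsetP WV1 _ (proj1 (Hpsi j2))) xy).
    by rewrite (proj2 (Hpsi j1)) (proj2 (Hpsi j2)).
  have := bW S SW sS; rewrite cS => h; slia.
set K := [set x in V1 | col' x == i].
set NV := V1 :&: Nb v.
have cNV : #|NV| = d by [].
have KNV : K \subset NV.
  by rewrite subsetI Ki andbT; apply/subsetP => x; rewrite inE => /andP [].
have ci : cnt m a i = m %/ a.
  apply/eqP; rewrite eqn_leq; apply/andP; split.
    by rewrite -(T2 i) -dq -cNV subset_leq_card.
  by rewrite cnt_formula // leq_addr.
have cr : cnt m a (m %% a) = m %/ a by rewrite cnt_formula ?ltnn ?addn0 // ltn_pmod.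
have /eqP KE : K == NV by rewrite eqEcard KNV cNV /K (T2 i) ci dq leqnn.
have eNv : forall x, x \in V1 -> e v x = (col' x == i).
  move=> x xV1; have := congr1 (fun A : {set T} => x \in A) KE.
  move: xV1; rewrite /= !inE => /andP [-> ->] /=; by move->.
set r := m %% a.
pose sw j := if j == i then r else if j == r then i else j.
have swK : involutive sw.
  move=> j; rewrite /sw.
  case: (eqVneq j i) => [->|ji]; first by rewrite eqxx; case: (eqVneq r i) => [->|]; rewrite ?eqxx.
  case: (eqVneq j r) => [->|jr]; first by rewrite eqxx.
  by rewrite (negbTE ji) (negbTE jr).
pose c0 x := if x == v then i else col' x.
exists (fun x => sw (c0 x)); split.
  move=> x y xV yV xy; rewrite (inj_eq (can_inj swK)) /c0.
  case: (eqVneq x v) => [xv|xv]; case: (eqVneq y v) => [yv|yv].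
  - by move: xy; rewrite xv yv eqxx.
  - by rewrite xv eNv 1?eq_sym // /V1 !inE yv yV.
  - by rewrite yv esym eNv // /V1 !inE xv xV.
  - by apply: T1 => //; rewrite /V1 !inE ?xv ?yv ?xV ?yV.
move=> j.
rewrite (_ : [set x in V | sw (c0 x) == j] = [set x in V | c0 x == sw j]); last first.
  by apply/setP => x; rewrite !inE (can2_eq swK swK).
rewrite (fib_split _ _ vV) /c0 eqxx.
rewrite (_ : #|[set x in V :\ v | (if x == v then i else col' x) == sw j]| = cnt m a (sw j)); last first.
  rewrite -(T2 (sw j)); apply: eq_card => x; rewrite !inE.
  by case: (eqVneq x v).
rewrite cV cntS -/r /sw.
case: (eqVneq j i) => [->|ji].
  by rewrite ci cr addnC eq_sym.
case: (eqVneq j r) => [->|jr].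
  by rewrite eqxx ci cr addnC.
by rewrite eq_sym (negbTE ji) addn0.
Qed.


Lemma FV_prod N : forall V : {set T}, #|V| <= N -> forall a (col : T -> nat),
  (forall x y, x \in V -> y \in V -> x != y -> e x y = (col x == col y)) ->
  (forall x, x \in V -> col x < a) ->
  FV V = \prod_(i < a) (#|[set x in V | col x == i]| + 1).
Proof.
have empty_case : forall a (col : T -> nat), FV set0 = \prod_(i < a) (#|[set x in set0 | col x == i]| + 1).
  move=> a col; rewrite FV0 big1 // => i _.
  by rewrite (_ : [set x in set0 | _] = set0) ?cards0 //; apply/setP => x; rewrite !inE.
elim: N => [|N IH] V.
  by rewrite leqn0 cards_eq0 => /eqP -> a col _ _; apply: empty_case.
move=> VN a col UC cl; case: (set_0Vmem V) => [->|[v vV]]; first exact: empty_case.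
rewrite (FV_rec vV).
set V1 := V :\ v. set W := V1 :\: Nb v.
have V1V : V1 \subset V by apply: subD1set.
have WV1 : W \subset V1 by apply: subsetDl.
have cV1 : #|V1| <= N by move: VN; rewrite (cardsD1 v V) vV.
have cW : #|W| <= N by apply: leq_trans cV1; apply: subset_leq_card.
have UC1 : forall x y, x \in V1 -> y \in V1 -> x != y -> e x y = (col x == col y).
  by move=> x y xV yV; apply: UC; apply: (subsetP V1V).
have UCW : forall x y, x \in W -> y \in W -> x != y -> e x y = (col x == col y).
  by move=> x y xV yV; apply: UC1; apply: (subsetP WV1).
have cl1 : forall x, x \in V1 -> col x < a by move=> x /(subsetP V1V); apply: cl.
have clW : forall x, x \in W -> col x < a by move=> x /(subsetP WV1); apply: cl1.
rewrite (IH V1 cV1 a col UC1 cl1) (IH W cW a col UCW clW).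
set r := col v.
have Wc : forall x, (x \in W) = (x \in V1) && (r != col x).
  move=> x; rewrite /W /V1 !inE; case: (eqVneq x v) => [->|xv]; first by rewrite !andbF.
  rewrite /=; case xV: (x \in V); rewrite ?andbF ?andbT //=.
  by rewrite /r UC // eq_sym.
have f1 : forall j, #|[set x in V | col x == j]| = (r == j) + #|[set x in V1 | col x == j]|.
  by move=> j; apply: fib_split.
have fW : forall j, #|[set x in W | col x == j]| = if r == j then 0 else #|[set x in V1 | col x == j]|.
  move=> j; case: (eqVneq r j) => [<-|rj].
    apply/eqP; rewrite cards_eq0; apply/eqP/setP => x; rewrite inE Wc inE.
    by rewrite in_set0; case: (eqVneq (col x) r) => [_|h]; rewrite /= ?andbF.
  apply: eq_card => x; rewrite inE Wc inE; case: (eqVneq (col x) j) => [->|_]; rewrite ?andbF //= ?rj ?andbT //.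
pose ir : 'I_a := Ordinal (cl v vV).
set P := \prod_(i < a | i != ir) (#|[set x in V | col x == i]| + 1).
have E1 : \prod_(i < a) (#|[set x in V1 | col x == i]| + 1) = (#|[set x in V1 | col x == r]| + 1) * P.
  rewrite (bigD1 ir) //=; congr (_ * _); apply: eq_bigr => i ne.
  rewrite f1; have -> : (r == i) = false by apply/negbTE; rewrite eq_sym.
  by [].
have E2 : \prod_(i < a) (#|[set x in W | col x == i]| + 1) = 1 * P.
  rewrite (bigD1 ir) //=; rewrite fW eqxx; congr (_ * _); apply: eq_bigr => i ne.
  rewrite fW f1; have -> : (r == i) = false by apply/negbTE; rewrite eq_sym.
  by [].
have E3 : \prod_(i < a) (#|[set x in V | col x == i]| + 1) = (#|[set x in V | col x == r]| + 1) * P.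
  by rewrite (bigD1 ir).
rewrite E1 E2 E3 f1 eqxx add1n. set s := #|[set x in V1 | col x == r]|. slia.
Qed.

End Graph.

Lemma match_fib (A B : finType) (g : A -> nat) (h : B -> nat) (b0 : B) n :
  forall (X : {set A}) (Y : {set B}), #|X| <= n ->
  (forall j, #|[set x in X | g x == j]| = #|[set y in Y | h y == j]|) ->
  exists f : A -> B, {in X &, injective f} /\ (forall x, x \in X -> f x \in Y /\ h (f x) = g x).
Proof.
elim: n => [|n IH] X Y.
  rewrite leqn0 cards_eq0 => /eqP -> _; exists (fun _ => b0); split; first by move=> x y; rewrite inE.
  by move=> x; rewrite inE.
move=> Xn Hc; case: (set_0Vmem X) => [->|[x xX]].
  by exists (fun _ => b0); split; [move=> ? ?; rewrite inE | move=> ?; rewrite inE].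
have : 0 < #|[set y in Y | h y == g x]|.
  by rewrite -Hc; apply/card_gt0P; exists x; rewrite !inE xX eqxx.
case/card_gt0P => y; rewrite !inE => /andP [yY /eqP hy].
have Xn' : #|X :\ x| <= n by move: Xn; rewrite (cardsD1 x X) xX.
have Hc' : forall j, #|[set z in X :\ x | g z == j]| = #|[set z in Y :\ y | h z == j]|.
  move=> j; move: (Hc j); rewrite (fib_split _ _ xX) (fib_split _ _ yY) hy.
  by move/eqP; rewrite eqn_add2l => /eqP.
have [f' [inj' mp']] := IH _ _ Xn' Hc'.
have inX : forall z, z != x -> z \in X -> z \in X :\ x by move=> z nz zX; rewrite !inE nz zX.
exists (fun z => if z == x then y else f' z); split.
  move=> z1 z2 z1X z2X /=.
  case: (eqVneq z1 x) => [->|n1]; case: (eqVneq z2 x) => [->|n2] // E.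
  - have := proj1 (mp' z2 (inX _ n2 z2X)); rewrite -E !inE eqxx //.
  - have := proj1 (mp' z1 (inX _ n1 z1X)); rewrite E !inE eqxx //.
  - by apply: inj' => //; apply: inX.
move=> z zX; case: (eqVneq z x) => [->|nz]; first by rewrite yY hy.
have [H1 H2] := mp' z (inX _ nz zX); split=> //.
by move: H1; rewrite !inE => /andP [].
Qed.

Theorem mainTheorem5 (T : finType) (e : rel T) :
  simple_graph e -> 0 < #|T| ->
  fib_index e <= fT #|T| (alpha e) /\
  (fib_index e = fT #|T| (alpha e) <-> iso_turan e (alpha e)).
Proof.
move=> [esym eirr] Tpos.
set a := alpha e.
have bT : bounded e setT a.
  move=> A _ sA; rewrite /a /alpha.
  exact: (leq_bigmax_cond (P := stable e) (F := fun A : {set T} => #|A|) A sA).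
have [x0 _] : exists x0 : T, x0 \in T by apply/card_gt0P.
have a0 : 0 < a.
  by apply: leq_trans (bT [set x0] (subsetT _) (stable1 eirr x0)); rewrite cards1.
have FVT : fib_index e = FV e setT.
  by rewrite /fib_index /FV /stS; apply: eq_card => A; rewrite !inE subsetT.
have [le eqi] := main_ind esym eirr (leqnn #|[set: T]|) bT.
rewrite cardsT in le eqi.
split; first by rewrite FVT.
split.
- rewrite FVT => /eqi [col [T1 T2]].
  have Hc : forall j, #|[set x in [set: T] | col x == j]| =
                      #|[set k in [set: 'I_#|T|] | k %% a == j]|.
    move=> j; rewrite T2 cardsT -card_ord_cnt; apply: eq_card => k; rewrite !inE.
    by [].
  have [f [inj mp]] := match_fib (Ordinal Tpos) (leqnn _) Hc.
  have finj : injective f by move=> x y; apply: inj; rewrite inE.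
  exists f; split; first by apply: inj_card_bij => //; rewrite card_ord.
  move=> x y; rewrite /turan_rel.
  have [_ hx] := mp x (in_setT x). have [_ hy] := mp y (in_setT y).
  case: (eqVneq x y) => [->|xy]; first by rewrite eirr eqxx.
  by rewrite (inj_eq finj) xy /= hx hy; apply: T1; rewrite ?in_setT.
- move=> [f [bij Hf]]; rewrite FVT.
  have finj := bij_inj bij.
  rewrite (@FV_prod T e esym eirr _ setT (leqnn _) a (fun x => f x %% a)); last first.
  + by move=> x _; rewrite ltn_pmod.
  + by move=> x y _ _ xy; rewrite Hf /turan_rel (inj_eq finj) xy.
  rewrite -(prod_cnt #|T| a0); apply: eq_bigr => i _; congr (_ + 1).
  rewrite -card_ord_cnt -(card_imset _ finj); apply: eq_card => k; rewrite !inE.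
  case: bij => g fg gf.
  apply/imsetP/idP => [[x] | Hk].
    by rewrite !inE => Hx ->.
  by exists (g k); rewrite ?inE gf.
Qed.
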